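(* Let $n\ge2$ and let $D_n$ be the group of even signed permutations of $\{\pm1,\ldots,\pm n\}$. For $\pi\in D_n$ set $\pi(0)=-\pi(2)$, $\mathrm{des}(\pi)=\#\{0\le i<n : \pi(i)>\pi(i+1)\}$ and $\mathrm{ides}(\pi)=\mathrm{des}(\pi^{-1})$. For $\pi$ uniformly random in $D_n$ let $X_{\mathrm{des}}=\mathrm{des}(\pi)$ and $X_{\mathrm{des}+\mathrm{ides}}=\mathrm{des}(\pi)+\mathrm{ides}(\pi)$. Then \[ \mathbb{E}(X_{\mathrm{des}+\mathrm{ides}})=n,\qquad \mathbb{V}(X_{\mathrm{des}+\mathrm{ides}}) = 2\,\mathbb{V}(X_{\mathrm{des}}) + \frac{n}{2n-2}. \]
   Context: A signed permutation is a bijection $\pi$ of $\{\pm1,\ldots,\pm n\}$ with $\pi(-i)=-\pi(i)$, written $[\pi(1),\ldots,\pi(n)]$; it is even if an even number of $\pi(1),\ldots,\pi(n)$ are negative. The convention $\pi(0)=-\pi(2)$ is applied to both $\pi$ and $\pi^{-1}$. *)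

(* Defs.v *)
From mathcomp Require Import all_boot all_order all_fingroup all_algebra.
Set Implicit Arguments. Unset Strict Implicit. Unset Printing Implicit Defensive.
Import Order.TTheory GRing.Theory Num.Theory.
Local Open Scope ring_scope.

(* A signed permutation pi of {+-1,...,+-n} is encoded as a pair (s, e) with
   s : 'S_n and e : {ffun 'I_n -> bool}, meaning
   pi(i+1) = (-1)^(e i) * (s i + 1)   for i : 'I_n. *)
Definition sperm (n : nat) := ('S_n * {ffun 'I_n -> bool})%type.

(* value pi(k) for k = 1..n (given as an ordinal k-1) *)
Definition spval n (p : sperm n) (i : 'I_n) : int :=
  if p.2 i then - ((p.1 i).+1)%:Z else ((p.1 i).+1)%:Z.

(* value pi(k) for a natural number k, with the convention pi(0) = -pi(2). *)
Definition spat n (p : sperm n) (k : nat) : int :=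
  match k with
  | 0%N => match insub 1%N : option 'I_n with
           | Some j => - spval p j | None => 0 end
  | k'.+1 => match insub k' : option 'I_n with
             | Some j => spval p j | None => 0 end
  end.

(* inverse signed permutation: pi^{-1}(s i + 1) = (-1)^(e i) (i+1) *)
Definition spinv n (p : sperm n) : sperm n :=
  (p.1^-1, [ffun j => p.2 (p.1^-1 j)])%g.

Definition speven n (p : sperm n) : bool := ~~ odd #|[set i | p.2 i]|.

Definition des n (p : sperm n) : nat :=
  #|[set i : 'I_n | spat p (val i).+1 < spat p (val i)]|.

Definition ides n (p : sperm n) : nat := des (spinv p).

Definition ED n (X : sperm n -> nat) : rat :=
  (\sum_(p : sperm n | speven p) (X p)%:R) / (#|[set p : sperm n | speven p]|)%:R.

Definition VD n (X : sperm n -> nat) : rat :=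
  ED (fun p => (X p) ^ 2)%N - (ED X) ^+ 2.

(* Main.v *)
Require Import Defs.
From mathcomp Require Import all_boot all_order all_fingroup all_algebra.
From mathcomp Require Import zify.
From mathcomp.algebra_tactics Require Import ring.
Set Implicit Arguments. Unset Strict Implicit. Unset Printing Implicit Defensive.
Import Order.TTheory GRing.Theory Num.Theory.

Local Open Scope ring_scope.

Definition sgn (b : bool) (x : int) : int := if b then - x else x.
Definition rt (k : nat) : int := if k is 0%N then -2 else k%:Z.
Definition phi (i : nat) (z : int) : int :=
  let a := rt i in let b := rt i.+1 in
  if z == a then b else if z == b then a else
  if z == - a then - b else if z == - b then - a else z.
Definition exc (i : nat) (x y : int) : bool :=
  [|| (x == rt i) && (y == rt i.+1), (x == rt i.+1) && (y == rt i),
      (x == - rt i) && (y == - rt i.+1) | (x == - rt i.+1) && (y == - rt i)].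
Definition vld (n : nat) (z : int) : bool := (z != 0) && (`|z| <= n%:Z).

Ltac caseeqs := repeat (case: eqP => /= ?); try lia.

Lemma phiP i z : (z = rt i /\ phi i z = rt i.+1) \/ (z = rt i.+1 /\ phi i z = rt i) \/
  (z = - rt i /\ phi i z = - rt i.+1) \/ (z = - rt i.+1 /\ phi i z = - rt i) \/
  (z <> rt i /\ z <> rt i.+1 /\ z <> - rt i /\ z <> - rt i.+1 /\ phi i z = z).
Proof.
rewrite /phi; case: (z =P rt i) => [->|h1]; first by left.
case: (z =P rt i.+1) => [->|h2]; first by right; left.
case: (z =P - rt i) => [->|h3]; first by do 2 right; left.
case: (z =P - rt i.+1) => [->|h4]; first by do 3 right; left.
by do 4 right.
Qed.

Lemma rt0 : rt 0 = -2. Proof. by []. Qed.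
Lemma rtS k : rt k.+1 = k.+1%:Z. Proof. by []. Qed.
Ltac dphi := intros [[? ?]|[[? ?]|[[? ?]|[[? ?]|[? [? [? [? ?]]]]]]]].
Ltac phis i z := have := phiP i z; have := phiP i (phi i z);
  set w := phi i (phi i z); set v := phi i z.

Lemma rt_lt k : rt k < rt k.+1.
Proof. by case: k => [|k] /=; lia. Qed.

Lemma phiK i z : phi i (phi i z) = z.
Proof. phis i z; case: i @v @w => [|i] /= v w; lia. Qed.

Lemma phiN i z : phi i (- z) = - phi i z.
Proof. rewrite /phi; case: i => [|i] /=; caseeqs. Qed.

Lemma phi_rt i : phi i (rt i) = rt i.+1.
Proof. by rewrite /phi eqxx. Qed.
Lemma phi_rtS i : phi i (rt i.+1) = rt i.
Proof. rewrite /phi; case: i => [|i] /=; caseeqs. Qed.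

Lemma vld_phi n i z : (1 < n)%N -> (i < n)%N -> vld n z -> vld n (phi i z).
Proof. move: (phiP i z); set v := phi i z; rewrite /vld ?rtS; case: i @v => [|i] v; rewrite ?rt0 ?rtS; dphi; lia. Qed.

Lemma vld_rt n i : (1 < n)%N -> (i < n)%N -> vld n (rt i) && vld n (rt i.+1).
Proof. rewrite /vld; case: i => [|i] /=; lia. Qed.

Lemma phi_lt i x y : x != 0 -> y != 0 -> `|x| != `|y| -> ~~ exc i x y ->
  (phi i y < phi i x) = (y < x).
Proof. rewrite /exc /phi; case: i => [|i] /=; caseeqs. Qed.

Lemma exc_phi i x y : exc i (phi i x) (phi i y) = exc i x y.
Proof. have := phiP i x; have := phiP i y; set u := phi i x; set v := phi i y.
rewrite /exc ?rtS; case: i @u @v => [|i] u v; rewrite ?rt0 ?rtS; dphi; dphi; lia. Qed.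

Lemma exc_sym i x y : exc i y x = exc i x y.
Proof. rewrite /exc; case: i => [|i] /=; caseeqs. Qed.


Definition sapp n (p : sperm n) (z : int) : int :=
  match z with Posz 0 => 0 | Posz k.+1 => spat p k.+1 | Negz k => - spat p k.+1 end.

Lemma sgnK b x : sgn b (sgn b x) = x.
Proof. by case: b => //=; rewrite opprK. Qed.
Lemma sgnN b x : sgn b (- x) = - sgn b x.
Proof. by case: b. Qed.
Lemma sgn_addb a b x : sgn (a (+) b) x = sgn a (sgn b x).
Proof. by case: a; case: b => //=; rewrite opprK. Qed.

Lemma sappN n (p : sperm n) z : sapp p (- z) = - sapp p z.
Proof. by case: z => [[|k]|k] //=; rewrite opprK. Qed.
Lemma sapp_sgn n (p : sperm n) b z : sapp p (sgn b z) = sgn b (sapp p z).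
Proof. by case: b => //=; rewrite sappN. Qed.

Lemma sapp_rt n (p : sperm n) k : sapp p (rt k) = spat p k.
Proof. case: k => [|k] //=. rewrite /spat /=. by case: insub => [j|] //=; rewrite oppr0. Qed.

Lemma sapp_k n (p : sperm n) (k : 'I_n) : sapp p (k.+1)%:Z = spval p k.
Proof. rewrite /= /spat (insubT (fun j => j < n)%N (ltn_ord k)) /=. by congr spval; apply: val_inj. Qed.

Lemma spvalE n (p : sperm n) k : spval p k = sgn (p.2 k) ((p.1 k).+1)%:Z.
Proof. by []. Qed.

Lemma vldP n z : vld n z -> exists k : 'I_n, exists b, z = sgn b (k.+1)%:Z.
Proof.
rewrite /vld; case: z => [[|m]|m] //= h.
  have hm : (m < n)%N by lia.
  by exists (Ordinal hm); exists false.
have hm : (m < n)%N by lia.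
by exists (Ordinal hm); exists true.
Qed.

Lemma vld_sgn n b (k : 'I_n) : vld n (sgn b (k.+1)%:Z).
Proof. have := ltn_ord k; rewrite /vld; case: b => /=; lia. Qed.

Lemma vld_sgnE n b z : vld n (sgn b z) = vld n z.
Proof. rewrite /vld; case: b => //=; lia. Qed.

Lemma sapp_vld n (p : sperm n) z : vld n z -> vld n (sapp p z).
Proof. by move/vldP=> [k [b ->]]; rewrite sapp_sgn sapp_k spvalE !vld_sgnE; exact: (vld_sgn false (p.1 k)). Qed.

Lemma spinvK n (p : sperm n) : spinv (spinv p) = p.
Proof.
case: p => s e; rewrite /spinv /= invgK; congr pair.
by apply/ffunP => j; rewrite !ffunE permK.
Qed.

Lemma spval_inv n (p : sperm n) (k : 'I_n) : spval (spinv p) (p.1 k) = sgn (p.2 k) (k.+1)%:Z.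
Proof. by rewrite spvalE /spinv /= ffunE !permK. Qed.

Lemma sappK n (p : sperm n) z : vld n z -> sapp (spinv p) (sapp p z) = z.
Proof.
move/vldP=> [k [b ->]]; rewrite !sapp_sgn sapp_k spvalE sapp_sgn sapp_k spval_inv.
by rewrite sgnK.
Qed.

Lemma sappKV n (p : sperm n) z : vld n z -> sapp p (sapp (spinv p) z) = z.
Proof. by move=> h; rewrite -{1}(spinvK p) sappK. Qed.

Lemma sapp_eq n (p : sperm n) x y : vld n x -> vld n y ->
  (sapp p x == y) = (x == sapp (spinv p) y).
Proof.
move=> hx hy; apply/eqP/eqP => [<-|->]; first by rewrite sappK.
by rewrite sappKV.
Qed.

Lemma sapp_nz n (p : sperm n) z : vld n z -> sapp p z != 0.
Proof. by move/(sapp_vld p)/andP=> []. Qed.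

Lemma sapp_abs n (p : sperm n) x y : vld n x -> vld n y -> `|x| != `|y| ->
  `|sapp p x| != `|sapp p y|.
Proof.
move=> hx hy hxy; apply/negP => /eqP h.
have : (sapp p y == sapp p x) || (sapp p y == - sapp p x).
  move: h; lia.
have hnx : vld n (- x) by move: hx; rewrite /vld; lia.
rewrite -sappN !sapp_eq ?sapp_vld // !sappK //.
move: hxy; lia.
Qed.

Definition tR n (i : 'I_n) : {perm 'I_n} :=
  if val i == 0%N then tperm (insubd i 0%N) (insubd i 1%N) else tperm (insubd i i.-1) i.
Definition FR n (i : 'I_n) (x : 'I_n) : bool :=
  (val i == 0%N) && ((x == insubd i 0%N) || (x == insubd i 1%N)).
Definition R n (i : 'I_n) (p : sperm n) : sperm n :=
  ((tR i * p.1)%g, [ffun x => FR i x (+) p.2 (tR i x)]).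

Lemma tRK n (i : 'I_n) : (tR i * tR i)%g = 1%g.
Proof. by rewrite /tR; case: ifP => _; rewrite tperm2. Qed.

Lemma FR_tR n (i : 'I_n) x : FR i (tR i x) = FR i x.
Proof.
rewrite /FR /tR; case: eqP => //= _.
by case: tpermP => [->|->|/eqP ? /eqP ?]; rewrite ?eqxx ?orbT //.
Qed.

Lemma RK n (i : 'I_n) (p : sperm n) : R i (R i p) = p.
Proof.
case: p => s e; rewrite /R /= mulgA tRK mul1g; congr pair.
apply/ffunP => x; rewrite !ffunE FR_tR -permM tRK perm1.
by case: (FR i x); case: (e x).
Qed.

Lemma phi_k n (i k : 'I_n) : (1 < n)%N ->
  phi i (k.+1)%:Z = sgn (FR i k) ((tR i k).+1)%:Z.
Proof.
move=> hn; have h0 : (0 < n)%N by lia.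
rewrite /FR /tR; case: eqP => [i0|inz] /=.
  have e0 : val (insubd i 0%N) = 0%N by rewrite insubdK.
  have e1 : val (insubd i 1%N) = 1%N by rewrite insubdK.
  rewrite /phi i0 /=.
  case: tpermP => [->|->|/eqP a /eqP b].
  - by rewrite eqxx e1 e0 /=.
  - by rewrite eqxx orbT e0 e1.
  - have a' : nat_of_ord k != 0%N by apply: contra a => /eqP h; apply/eqP/val_inj; rewrite e0.
    have b' : nat_of_ord k != 1%N by apply: contra b => /eqP h; apply/eqP/val_inj; rewrite e1.
    rewrite (negbTE a) (negbTE b) /=; move: a' b'; caseeqs.
have inz' : nat_of_ord i != 0%N by apply/eqP.
have hi : (i.-1 < n)%N by have := ltn_ord i; lia.
have em : nat_of_ord (insubd i i.-1) = i.-1 by rewrite insubdK.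
have ri : rt i = (nat_of_ord i)%:Z by move: inz'; case: (nat_of_ord i).
rewrite /phi rtS ri.
case: tpermP => [->|->|/eqP a /eqP b].
- by rewrite em; move: inz'; caseeqs.
- by rewrite em; move: inz'; caseeqs.
- have a' : nat_of_ord k != i.-1 by apply: contra a => /eqP h; apply/eqP/val_inj; rewrite /= em.
  have b' : nat_of_ord k != i by apply: contra b => /eqP h; apply/eqP/val_inj.
  move: a' b' inz'; caseeqs.
Qed.

Lemma R_sapp n (i : 'I_n) (p : sperm n) z : (1 < n)%N -> vld n z ->
  sapp (R i p) z = sapp p (phi i z).
Proof.
move=> hn /vldP [k [b ->]].
have phs : forall c x, phi i (sgn c x) = sgn c (phi i x) by case=> x //=; rewrite phiN.
rewrite phs !sapp_sgn sapp_k phi_k // sapp_sgn sapp_k.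
by rewrite !spvalE /R /= ffunE permM sgn_addb.
Qed.


Definition Dd n (i : nat) (p : sperm n) : bool := sapp p (rt i.+1) < sapp p (rt i).
Definition Ij n (i : nat) (p : sperm n) : bool := Dd i (spinv p).
Definition E n (i j : nat) (p : sperm n) : bool :=
  exc i (sapp (spinv p) (rt j)) (sapp (spinv p) (rt j.+1)).
Definition L n (j : 'I_n) (p : sperm n) : sperm n := spinv (R j (spinv p)).

Lemma rt_abs k : `|rt k| != `|rt k.+1|.
Proof. case: k => [|k] /=; lia. Qed.

Section Logic.
Variables (n : nat) (hn : (1 < n)%N).

Lemma vld_i (i : 'I_n) : vld n (rt i).
Proof. by case/andP: (vld_rt hn (ltn_ord i)). Qed.
Lemma vld_iS (i : 'I_n) : vld n (rt i.+1).
Proof. by case/andP: (vld_rt hn (ltn_ord i)). Qed.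
Lemma vldN z : vld n (- z) = vld n z.
Proof. rewrite /vld; lia. Qed.

Lemma des_Dd (p : sperm n) : des p = #|[set i : 'I_n | Dd i p]|.
Proof. by apply: eq_card => i; rewrite !inE /Dd !sapp_rt. Qed.
Lemma ides_Ij (p : sperm n) : ides p = #|[set i : 'I_n | Ij i p]|.
Proof. by rewrite /ides des_Dd. Qed.

Lemma lt_neq (a b : int) : a != b -> (a < b) = ~~ (b < a).
Proof. lia. Qed.

Lemma Dd_R (i : 'I_n) (p : sperm n) : Dd i (R i p) = ~~ Dd i p.
Proof.
rewrite /Dd !R_sapp ?vld_i ?vld_iS // phi_rt phi_rtS lt_neq //.
by rewrite sapp_eq ?vld_i ?vld_iS ?sapp_vld ?vld_iS // sappK ?vld_iS //; move: (rt_lt i); lia.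
Qed.

Lemma spinv_R (i : 'I_n) (p : sperm n) z : vld n z ->
  sapp (spinv (R i p)) z = phi i (sapp (spinv p) z).
Proof.
move=> hz; set w := phi i (sapp (spinv p) z).
have hw : vld n w by apply: vld_phi => //; exact: sapp_vld.
have : sapp (R i p) w = z by rewrite R_sapp // phiK sappKV.
by move=> <-; rewrite sappK.
Qed.

Lemma Ij_R (i j : 'I_n) (p : sperm n) : ~~ E i j p -> Ij j (R i p) = Ij j p.
Proof.
move=> hE; rewrite /Ij /Dd !spinv_R ?vld_i ?vld_iS //.
rewrite phi_lt // ?sapp_nz ?vld_i ?vld_iS // sapp_abs ?vld_i ?vld_iS ?rt_abs //.
Qed.

Lemma E_R (i j : 'I_n) (p : sperm n) : E i j (R i p) = E i j p.
Proof. by rewrite /E !spinv_R ?vld_i ?vld_iS // exc_phi. Qed.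

Lemma L_sapp (j : 'I_n) (p : sperm n) z : vld n z -> sapp (L j p) z = phi j (sapp p z).
Proof. by move=> hz; rewrite /L spinv_R // spinvK. Qed.

Lemma spinv_L (j : 'I_n) (p : sperm n) : spinv (L j p) = R j (spinv p).
Proof. by rewrite /L spinvK. Qed.

Lemma LK (j : 'I_n) (p : sperm n) : L j (L j p) = p.
Proof. by rewrite /L spinvK RK spinvK. Qed.

Lemma Ij_L (j : 'I_n) (p : sperm n) : Ij j (L j p) = ~~ Ij j p.
Proof. by rewrite /Ij spinv_L Dd_R. Qed.

Lemma E_L (i j : 'I_n) (p : sperm n) : E i j (L j p) = E i j p.
Proof.
by rewrite /E spinv_L !R_sapp ?vld_i ?vld_iS // phi_rt phi_rtS exc_sym.
Qed.

Lemma E_sym (i j : 'I_n) (p : sperm n) :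
  E i j p = exc j (sapp p (rt i)) (sapp p (rt i.+1)).
Proof.
have hi := vld_i i; have hi' := vld_iS i; have hj := vld_i j; have hj' := vld_iS j.
have hNj : vld n (- rt j) by rewrite vldN.
have hNj' : vld n (- rt j.+1) by rewrite vldN.
rewrite /E /exc !(sapp_eq p) // !(sappN (spinv p)).
set x := sapp (spinv p) (rt j); set y := sapp (spinv p) (rt j.+1).
set a := rt i; set b := rt i.+1.
by apply/idP/idP; case/or4P => /andP [/eqP -> /eqP ->]; rewrite ?opprK !eqxx ?orbT.
Qed.

Lemma Dd_L (i j : 'I_n) (p : sperm n) : ~~ E i j p -> Dd i (L j p) = Dd i p.
Proof.
rewrite E_sym => hE; rewrite /Dd !L_sapp ?vld_i ?vld_iS //.
rewrite phi_lt // ?sapp_nz ?vld_i ?vld_iS // sapp_abs ?vld_i ?vld_iS ?rt_abs //.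
Qed.

Lemma E_DI (i j : 'I_n) (p : sperm n) : E i j p -> Dd i p = Ij j p.
Proof.
rewrite /E /Ij /Dd.
have hj := vld_i j; have hj' := vld_iS j.
have fx : sapp p (sapp (spinv p) (rt j)) = rt j by rewrite sappKV.
have fy : sapp p (sapp (spinv p) (rt j.+1)) = rt j.+1 by rewrite sappKV.
move: fx fy.
set x := sapp (spinv p) (rt j); set y := sapp (spinv p) (rt j.+1).
move=> fx fy; have lij := rt_lt i; have ljj := rt_lt j.
case/or4P => /andP [/eqP hx /eqP hy].
- by rewrite -hx -hy fx fy; lia.
- by rewrite -hx -hy fx fy; lia.
- have ea : rt i = - x by rewrite hx opprK.
  have eb : rt i.+1 = - y by rewrite hy opprK.
  rewrite ea eb !sappN fx fy; lia.
- have ea : rt i = - y by rewrite hy opprK.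
  have eb : rt i.+1 = - x by rewrite hx opprK.
  rewrite ea eb !sappN fx fy; lia.
Qed.

End Logic.

Local Close Scope ring_scope.

Lemma card_setsum (T : finType) (P : pred T) : #|[set x | P x]| = \sum_x (P x : nat).
Proof.
rewrite -sum1_card big_mkcond; apply: eq_bigr => x _; rewrite !inE.
by case: (P x).
Qed.

Lemma card_in_setsum (T : finType) (A : {set T}) (P : pred T) :
  #|[set x in A | P x]| = \sum_(x in A) (P x : nat).
Proof.
rewrite -sum1_card [RHS]big_mkcond [LHS]big_mkcond; apply: eq_bigr => x _; rewrite !inE.
by case: (x \in A); case: (P x).
Qed.

Lemma card_split (T : finType) (A : {set T}) (P : pred T) :
  #|A| = #|[set x in A | P x]| + #|[set x in A | ~~ P x]|.
Proof.
rewrite !card_in_setsum -big_split /= -sum1_card; apply: eq_bigr => x _.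
by case: (P x).
Qed.

Lemma card_nest (T : finType) (A : {set T}) (P Q : pred T) :
  #|[set x in [set y in A | P y] | Q x]| = #|[set x in A | P x && Q x]|.
Proof. by apply: eq_card => x; rewrite !inE andbA. Qed.

Lemma inv_half (T : finType) (f : T -> T) (A : {set T}) (P : pred T) :
  involutive f -> (forall x, x \in A -> f x \in A) ->
  (forall x, x \in A -> P (f x) = ~~ P x) ->
  2 * #|[set x in A | P x]| = #|A|.
Proof.
move=> fK fA fP; rewrite (card_split A P) mul2n -addnn; congr addn.
rewrite -(card_imset _ (inv_inj fK)); apply: eq_card => y; rewrite !inE.
apply/imsetP/idP => [[x]|/andP [yA nPy]].
  by rewrite inE => /andP [xA Px] ->; rewrite fA // fP // Px.
exists (f y); last by rewrite fK.
by rewrite inE fA //= fP // nPy.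
Qed.

Lemma odd_card_xor (T : finType) (b c : pred T) :
  odd #|[set x | b x (+) c x]| = odd #|[set x | b x]| (+) odd #|[set x | c x]|.
Proof.
have h : \sum_x (b x (+) c x : nat) + (\sum_x (b x && c x : nat)).*2 =
         \sum_x (b x : nat) + \sum_x (c x : nat).
  rewrite -addnn -!big_split /=; apply: eq_bigr => x _.
  by destruct (b x), (c x).
by rewrite !card_setsum -oddD -h oddD odd_double addbF.
Qed.

Lemma card_perm_inv (T : finType) (t : {perm T}) (c : pred T) :
  #|[set x | c (t x)]| = #|[set x | c x]|.
Proof.
rewrite -[RHS](card_preimset _ (@perm_inj _ t)); apply: eq_card => x.
by rewrite !inE.
Qed.

Section Even.
Variables (n : nat) (hn : (1 < n)%N).

Lemma even_inv (p : sperm n) : speven (spinv p) = speven p.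
Proof.
rewrite /speven /spinv /=.
rewrite -(card_perm_inv (p.1^-1)%g (fun i => p.2 i)).
by congr (~~ odd _); apply: eq_card => x; rewrite !inE ffunE.
Qed.

Lemma even_R (i : 'I_n) (p : sperm n) : speven (R i p) = speven p.
Proof.
rewrite /speven /R /=.
rewrite (eq_card (B := [set x | FR i x (+) p.2 (tR i x)])); last first.
  by move=> x; rewrite !inE ffunE.
rewrite odd_card_xor (card_perm_inv (tR i) (fun x => p.2 x)).
suff -> : odd #|[set x | FR i x]| = false by [].
rewrite /FR; case: eqP => /= hi; last by rewrite (_ : [set x | false] = set0) ?cards0 //; apply/setP => x; rewrite !inE.
rewrite (_ : [set x | _] = [set insubd i 0%N; insubd i 1%N]); last by apply/setP => x; rewrite !inE.
rewrite cards2.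
suff -> : insubd i 0%N != insubd i 1%N by [].
apply/eqP => /(congr1 val); rewrite !insubdK //; lia.
Qed.

Lemma even_L (j : 'I_n) (p : sperm n) : speven (L j p) = speven p.
Proof. by rewrite /L even_inv even_R even_inv. Qed.

End Even.

Local Close Scope ring_scope.

Definition G n := [set p : sperm n | speven p].

Section Sums.
Variables (n : nat) (hn : (1 < n)%N).

Lemma four (i j : 'I_n) :
  4 * #|[set p in G n | Dd i p && Ij j p]| = #|G n| + #|[set p in G n | E i j p]|.
Proof.
set A1 := [set p in G n | E i j p]; set A0 := [set p in G n | ~~ E i j p].
have hG : #|G n| = #|A1| + #|A0| := card_split (G n) (E i j).
have hS : #|[set p in G n | Dd i p && Ij j p]| =
   #|[set p in A1 | Dd i p && Ij j p]| + #|[set p in A0 | Dd i p && Ij j p]|.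
  rewrite (card_split _ (E i j)); congr addn; apply: eq_card => p; rewrite /A1 /A0 !inE;
  by case: (speven p) (E i j p) (Dd i p) (Ij j p) => [] [] [] [].
have h1 : 2 * #|[set p in A1 | Dd i p && Ij j p]| = #|A1|.
  rewrite (eq_card (B := [set p in A1 | Dd i p])); last first.
    move=> p; rewrite /A1 /A0 !inE; case: (speven p) => //=; case hE: (E i j p) => //=.
    by rewrite -(E_DI hn hE) andbb.
  apply: (inv_half (f := R i)); first exact: RK.
    by move=> p; rewrite /A1 /A0 !inE even_R // E_R.
  by move=> p _; rewrite Dd_R.
have h0a : 2 * #|[set p in A0 | Dd i p && Ij j p]| = #|[set p in A0 | Ij j p]|.
  rewrite (eq_card (B := [set p in [set q in A0 | Ij j q] | Dd i p])); last first.
    move=> p; rewrite /A1 /A0 !inE; by case: (speven p) (E i j p) (Dd i p) (Ij j p) => [] [] [] [].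
  apply: (inv_half (f := R i)); first exact: RK.
    move=> p; rewrite /A1 /A0 !inE even_R // E_R // => /andP [/andP [-> hE] hI].
    by rewrite hE Ij_R.
  by move=> p _; rewrite Dd_R.
have h0b : 2 * #|[set p in A0 | Ij j p]| = #|A0|.
  apply: (inv_half (f := L j)); first exact: LK.
    by move=> p; rewrite /A1 /A0 !inE even_L // E_L.
  by move=> p _; rewrite Ij_L.
lia.
Qed.

Lemma sum_des : \sum_(p in G n) des p = \sum_(i : 'I_n) #|[set p in G n | Dd i p]|.
Proof.
rewrite (eq_bigr (fun p => \sum_(i : 'I_n) (Dd i p : nat))); last first.
  by move=> p _; rewrite des_Dd card_setsum.
rewrite exchange_big /=; apply: eq_bigr => i _; by rewrite card_in_setsum.
Qed.

Lemma sum_ides : \sum_(p in G n) ides p = \sum_(i : 'I_n) #|[set p in G n | Ij i p]|.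
Proof.
rewrite (eq_bigr (fun p => \sum_(i : 'I_n) (Ij i p : nat))); last first.
  by move=> p _; rewrite ides_Ij card_setsum.
rewrite exchange_big /=; apply: eq_bigr => i _; by rewrite card_in_setsum.
Qed.

Lemma sum_desides : \sum_(p in G n) des p * ides p =
  \sum_(i : 'I_n) \sum_(j : 'I_n) #|[set p in G n | Dd i p && Ij j p]|.
Proof.
rewrite (eq_bigr (fun p => \sum_(i : 'I_n) \sum_(j : 'I_n) (Dd i p && Ij j p : nat))); last first.
  move=> p _; rewrite des_Dd ides_Ij !card_setsum big_distrl /=; apply: eq_bigr => i _.
  by rewrite big_distrr /=; apply: eq_bigr => j _; rewrite mulnb.
rewrite exchange_big /=; apply: eq_bigr => i _.
rewrite exchange_big /=; apply: eq_bigr => j _; by rewrite card_in_setsum.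
Qed.

Lemma half_des : 2 * \sum_(p in G n) des p = n * #|G n|.
Proof.
rewrite sum_des big_distrr /= (eq_bigr (fun _ => #|G n|)).
  by rewrite sum_nat_const card_ord.
move=> i _; apply: (inv_half (f := R i)); first exact: RK.
  by move=> p; rewrite !inE even_R.
by move=> p _; rewrite Dd_R.
Qed.

Lemma half_ides : 2 * \sum_(p in G n) ides p = n * #|G n|.
Proof.
rewrite sum_ides big_distrr /= (eq_bigr (fun _ => #|G n|)).
  by rewrite sum_nat_const card_ord.
move=> i _; apply: (inv_half (f := L i)); first exact: LK.
  by move=> p; rewrite !inE even_L.
by move=> p _; rewrite Ij_L.
Qed.

Lemma sq_ides : \sum_(p in G n) (ides p ^ 2)%N = \sum_(p in G n) (des p ^ 2)%N.
Proof.
rewrite [RHS](reindex_inj (inv_inj (@spinvK n))) /=.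
apply: eq_big => p; first by rewrite !inE even_inv.
by rewrite /ides.
Qed.

Lemma sum_four :
  4 * (\sum_(p in G n) des p * ides p) =
  n * n * #|G n| + \sum_(i : 'I_n) \sum_(j : 'I_n) #|[set p in G n | E i j p]|.
Proof.
rewrite sum_desides big_distrr /=.
rewrite (eq_bigr (fun i : 'I_n => \sum_(j : 'I_n) (#|G n| + #|[set p in G n | E i j p]|))); last first.
  by move=> i _; rewrite big_distrr /=; apply: eq_bigr => j _; rewrite four.
rewrite (eq_bigr (fun i : 'I_n => n * #|G n| + \sum_(j : 'I_n) #|[set p in G n | E i j p]|)); last first.
  by move=> i _; rewrite big_split /= sum_nat_const card_ord.
by rewrite big_split /= sum_nat_const card_ord mulnA.
Qed.

End Sums.

Local Close Scope ring_scope.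

Lemma sum_const_dep (T : finType) (P : pred T) (c : nat) :
  \sum_(x | P x) c = #|P| * c.
Proof. by rewrite -sum_nat_const; apply: eq_bigl => x. Qed.

Definition Aset n (k1 k2 m1 m2 : 'I_n) := [set s : {perm 'I_n} | (s k1 == m1) && (s k2 == m2)].

Lemma Aset_le n (k1 k2 m1 m2 m1' m2' : 'I_n) : m1 != m2 -> m1' != m2' ->
  #|Aset k1 k2 m1 m2| <= #|Aset k1 k2 m1' m2'|.
Proof.
move=> h h'; set b := tperm m1 m1' m2; set t := (tperm m1 m1' * tperm b m2')%g.
have hb : b != m1'.
  by rewrite /b -[m1' in _ != m1'](tpermL m1 m1') (inj_eq perm_inj) eq_sym.
have t1 : t m1 = m1' by rewrite permM tpermL tpermD // eq_sym.
have t2 : t m2 = m2' by rewrite permM -/b tpermL.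
rewrite -(card_imset _ (mulIg t)); apply: subset_leq_card; apply/subsetP => _ /imsetP [s hs ->].
move: hs; rewrite !inE [(s * t)%g k1]permM [(s * t)%g k2]permM => /andP [/eqP -> /eqP ->].
by rewrite t1 t2 !eqxx.
Qed.

Lemma Aset_card n (k1 k2 m1 m2 : 'I_n) : k1 != k2 -> m1 != m2 ->
  #|Aset k1 k2 m1 m2| * (n * n.-1) = n`!.
Proof.
move=> hk hm.
have eqA : forall m1' m2' : 'I_n, m2' != m1' -> #|Aset k1 k2 m1' m2'| = #|Aset k1 k2 m1 m2|.
  move=> m1' m2' h; apply/anti_leq; rewrite !Aset_le // eq_sym //.
rewrite -card_Sn -[RHS]sum1_card.
rewrite (partition_big (fun s : {perm 'I_n} => (s k1, s k2)) (fun j => j.2 != j.1)) /=; last first.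
  by move=> s _ /=; rewrite (inj_eq perm_inj) eq_sym.
rewrite (eq_bigr (fun _ => #|Aset k1 k2 m1 m2|)); last first.
  move=> [a c] /= hac; rewrite -(eqA a c hac) -[RHS]sum1_card; apply: eq_bigl => s.
  by rewrite /Aset !inE xpair_eqE.
rewrite sum_const_dep mulnC; congr (_ * _); symmetry.
transitivity (\sum_(a : 'I_n * 'I_n | xpredT a.1 && (a.2 != a.1)) 1).
  by rewrite sum_const_dep muln1.
rewrite -(pair_big_dep xpredT (fun a c : 'I_n => c != a) (fun _ _ => 1)) /=.
under eq_bigr => a _ do rewrite sum_const_dep cardC1 card_ord muln1.
by rewrite sum_const_dep card_ord.
Qed.

Definition ev n (e : {ffun 'I_n -> bool}) := ~~ odd #|[set i | e i]|.
Definition Bset n (k1 k2 : 'I_n) (b1 b2 : bool) :=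
  [set e : {ffun 'I_n -> bool} | ev e && (e k1 == b1) && (e k2 == b2)].
Definition flip n (K : {set 'I_n}) (e : {ffun 'I_n -> bool}) : {ffun 'I_n -> bool} :=
  [ffun x => (x \in K) (+) e x].

Lemma flipK n (K : {set 'I_n}) : involutive (flip K).
Proof. by move=> e; apply/ffunP => x; rewrite !ffunE addbA addbb. Qed.

Lemma ev_flip n (K : {set 'I_n}) e : ~~ odd #|K| -> ev (flip K e) = ev e.
Proof.
move=> hK; rewrite /ev (eq_card (B := [set x | (x \in K) (+) e x])); last first.
  by move=> x; rewrite !inE ffunE.
rewrite odd_card_xor (_ : [set x | x \in K] = K); last by apply/setP => x; rewrite inE.
by rewrite (negbTE hK).
Qed.

Lemma ex3 n (k1 k2 : 'I_n) : (2 < n)%N -> exists k3 : 'I_n, (k3 != k1) && (k3 != k2).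
Proof.
move=> hn; case: (pickP (fun k => (k != k1) && (k != k2))) => [k hk|h]; first by exists k.
have : (#|'I_n| <= #|[set k1; k2]|)%N.
  apply: subset_leq_card; apply/subsetP => x _; rewrite !inE.
  by move: (h x); case: (x == k1); case: (x == k2).
rewrite card_ord cards2; case: (k1 != k2) => /=; lia.
Qed.

Lemma Bset_le n (k1 k2 : 'I_n) (K : {set 'I_n}) b1 b2 c1 c2 :
  ~~ odd #|K| ->
  (b1 (+) c1 = (k1 \in K)) -> (b2 (+) c2 = (k2 \in K)) ->
  (#|Bset k1 k2 b1 b2| <= #|Bset k1 k2 c1 c2|)%N.
Proof.
move=> hK h1 h2.
rewrite -(card_imset _ (inv_inj (flipK K))); apply: subset_leq_card.
apply/subsetP => _ /imsetP [e he ->]; move: he; rewrite !inE ev_flip // !ffunE.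
case/andP => /andP [-> /eqP ->] /eqP ->; rewrite -h1 -h2.
by case: b1 c1 b2 c2 {h1 h2} => [] [] [] [].
Qed.

Lemma Bset_eq n (k1 k2 : 'I_n) b1 b2 : (2 < n)%N -> k1 != k2 ->
  #|Bset k1 k2 b1 b2| = #|Bset k1 k2 true true|.
Proof.
move=> hn hk; case: (ex3 k1 k2 hn) => k3 /andP [h31 h32].
have K1 : ~~ odd #|[set k1; k3]| by rewrite cards2 eq_sym h31.
have K2 : ~~ odd #|[set k2; k3]| by rewrite cards2 eq_sym h32.
have m11 : k1 \in [set k1; k3] by rewrite !inE eqxx.
have m21 : (k2 \in [set k1; k3]) = false by rewrite !inE eq_sym (negbTE hk) eq_sym (negbTE h32).
have m12 : (k1 \in [set k2; k3]) = false by rewrite !inE (negbTE hk) eq_sym (negbTE h31).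
have m22 : k2 \in [set k2; k3] by rewrite !inE eqxx.
have s1 : forall c1 c2, #|Bset k1 k2 c1 c2| = #|Bset k1 k2 (~~ c1) c2|.
  move=> c1 c2; apply/anti_leq; rewrite !(@Bset_le _ k1 k2 [set k1; k3]) //;
  by rewrite ?m11 ?m21; case: c1; case: c2.
have s2 : forall c1 c2, #|Bset k1 k2 c1 c2| = #|Bset k1 k2 c1 (~~ c2)|.
  move=> c1 c2; apply/anti_leq; rewrite !(@Bset_le _ k1 k2 [set k2; k3]) //;
  by rewrite ?m12 ?m22; case: c1; case: c2.
case: b1; case: b2 => //.
all: first [by rewrite (s2 true false) | by rewrite (s1 false true) |
  by rewrite (s1 false false) (s2 true false)].
Qed.

Lemma Bset_card n (k1 k2 : 'I_n) b1 b2 : (2 < n)%N -> k1 != k2 ->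
  #|Bset k1 k2 b1 b2| * 4 = #|[set e : {ffun 'I_n -> bool} | ev e]|.
Proof.
move=> hn hk.
set Ev := [set e : {ffun 'I_n -> bool} | ev e].
rewrite (card_split Ev (fun e : {ffun 'I_n -> bool} => e k1)).
rewrite (card_split [set x in Ev | x k1] (fun e : {ffun 'I_n -> bool} => e k2)).
rewrite (card_split [set x in Ev | ~~ x k1] (fun e : {ffun 'I_n -> bool} => e k2)).
rewrite !card_nest.
have e1 : forall c1 c2, #|[set x in Ev | ((if c1 then id else negb) (x k1)) && ((if c2 then id else negb) (x k2))]| = #|Bset k1 k2 c1 c2|.
  move=> c1 c2; apply: eq_card => x; rewrite /Ev /Bset !inE.
  by case: c1; case: c2; case: (x k1); case: (x k2); rewrite ?andbT ?andbF.
rewrite (e1 true true) (e1 true false) (e1 false true) (e1 false false).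
rewrite (Bset_eq b1 b2 hn hk) (Bset_eq true false hn hk) (Bset_eq false true hn hk) (Bset_eq false false hn hk); lia.
Qed.

Lemma fiber n (k1 k2 m1 m2 : 'I_n) b1 b2 : (2 < n)%N -> k1 != k2 -> m1 != m2 ->
  #|[set p in G n | (p.1 k1 == m1) && (p.1 k2 == m2) && (p.2 k1 == b1) && (p.2 k2 == b2)]|
    * (4 * (n * n.-1)) = #|G n|.
Proof.
move=> hn hk hm.
have -> : [set p in G n | (p.1 k1 == m1) && (p.1 k2 == m2) && (p.2 k1 == b1) && (p.2 k2 == b2)]
   = setX (Aset k1 k2 m1 m2) (Bset k1 k2 b1 b2).
  apply/setP => [[s e]]; rewrite /G /Aset /Bset !inE /= /speven /ev.
  by case: (odd _); case: (s k1 == m1); case: (s k2 == m2); case: (e k1 == b1).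
have -> : G n = setX [set: {perm 'I_n}] [set e | ev e].
  by apply/setP => [[s e]]; rewrite /G !inE.
rewrite !cardsX cardsT card_Sn -(Aset_card hk hm) -(Bset_card b1 b2 hn hk).
ring.
Qed.

Local Open Scope ring_scope.

Lemma spval_eq n (p : sperm n) (k m : 'I_n) b :
  (spval p k == sgn b (m.+1)%:Z) = (p.1 k == m) && (p.2 k == b).
Proof.
rewrite spvalE -val_eqE /=; case: (p.2 k); case: b => /=; lia.
Qed.

Lemma sgn_move b (x u : int) : (sgn b x == u) = (x == sgn b u).
Proof. by case: b => //=; rewrite eqr_oppLR. Qed.

Lemma fiber_int n (k1 k2 : 'I_n) (u v : int) : (2 < n)%N -> k1 != k2 ->
  vld n u -> vld n v -> `|u| != `|v| ->
  (#|[set p in G n | (spval p k1 == u) && (spval p k2 == v)]| * (4 * (n * n.-1)))%N = #|G n|.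
Proof.
move=> hn hk /vldP [m1 [c1 eu]] /vldP [m2 [c2 ev]] huv.
have hm : m1 != m2.
  apply: contra huv => /eqP e; rewrite eu ev e.
  by case: c1 c2 {eu ev} => [] [] /=; rewrite ?normrN.
rewrite -(fiber c1 c2 hn hk hm); congr (_ * _)%N; apply: eq_card => p.
rewrite /G !inE eu ev !spval_eq.
by case: (speven p); case: (p.1 k1 == m1); case: (p.1 k2 == m2); case: (p.2 k1 == c1).
Qed.

Lemma or4_nat (A B C D : bool) : ~~ (A && B) -> ~~ (A && C) -> ~~ (A && D) ->
  ~~ (B && C) -> ~~ (B && D) -> ~~ (C && D) ->
  nat_of_bool [|| A, B, C | D] = (A + B + C + D)%N.
Proof. by case: A; case: B; case: C; case: D. Qed.

Lemma exc_nat i X Y : nat_of_bool (exc i X Y) =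
  (((X == rt i) && (Y == rt i.+1)) + ((X == rt i.+1) && (Y == rt i)) +
   ((X == - rt i) && (Y == - rt i.+1)) + ((X == - rt i.+1) && (Y == - rt i)))%N.
Proof.
have hc : rt i != 0 by case: i.
have hd : rt i.+1 != 0 by [].
have hcd := rt_abs i.
rewrite /exc; apply: or4_nat; apply/negP => /andP [/andP [/eqP h1 _] /andP [/eqP h2 _]];
  move: hc hd hcd; rewrite h1 in h2; lia.
Qed.

Lemma sum4 (x1 x2 x3 x4 g : nat) : (4 * x1 = g -> 4 * x2 = g -> 4 * x3 = g -> 4 * x4 = g ->
  x1 + x2 + x3 + x4 = g)%N.
Proof. lia. Qed.

Lemma E_card n (i j : 'I_n) : (2 < n)%N ->
  (#|[set p in G n | E i j p]| * (n * n.-1))%N = #|G n|.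
Proof.
move=> hn; have hn1 : (1 < n)%N by lia.
have [ka [sa ea]] := vldP (vld_i hn1 i).
have [kb [sb eb]] := vldP (vld_iS hn1 i).
have hk : ka != kb.
  apply: contra (rt_abs i) => /eqP e; rewrite ea eb e.
  by clear ea eb; case: sa sb => [] [] /=; rewrite ?normrN.
rewrite (eq_card (B := [set p in G n | exc j (sgn sa (spval p ka)) (sgn sb (spval p kb))])); last first.
  by move=> p; rewrite !inE E_sym // ea eb !sapp_sgn !sapp_k.
have F : forall u v, vld n u -> vld n v -> `|u| != `|v| ->
   ((\sum_(p in G n) nat_of_bool ((sgn sa (spval p ka) == u) && (sgn sb (spval p kb) == v)))
     * (4 * (n * n.-1)))%N = #|G n|.
  move=> u v hu hv huv; rewrite -card_in_setsum.
  rewrite -(fiber_int (u := sgn sa u) (v := sgn sb v) hn hk); rewrite ?vld_sgnE //; last first.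
    by clear ea eb; case: sa; case: sb; rewrite /= ?normrN.
  by congr (_ * _)%N; apply: eq_card => p; rewrite !inE !sgn_move.
have hc := vld_i hn1 j; have hd := vld_iS hn1 j.
have hcd := rt_abs j.
have hNc : vld n (- rt j) by rewrite vldN.
have hNd : vld n (- rt j.+1) by rewrite vldN.
rewrite card_in_setsum.
under eq_bigr => p _ do rewrite exc_nat.
rewrite !big_split /=.
have F1 := F _ _ hc hd hcd.
have F2 := F _ _ hd hc (negbT (introF eqP (fun h => (negP hcd) (introT eqP (esym h))))).
have F3 := F _ _ hNc hNd ltac:(by rewrite !normrN).
have F4 := F _ _ hNd hNc ltac:(by rewrite !normrN eq_sym).
move: F1 F2 F3 F4.
set a1 := \sum_(p in G n) _; set a2 := \sum_(p in G n) _;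
set a3 := \sum_(p in G n) _; set a4 := \sum_(p in G n) _.
move: (n * n.-1)%N => N.
move=> F1 F2 F3 F4.
have e1 : (4 * (a1 * N) = #|G n|)%N by rewrite -F1; ring.
have e2 : (4 * (a2 * N) = #|G n|)%N by rewrite -F2; ring.
have e3 : (4 * (a3 * N) = #|G n|)%N by rewrite -F3; ring.
have e4 : (4 * (a4 * N) = #|G n|)%N by rewrite -F4; ring.
rewrite !mulnDl; exact: (sum4 e1 e2 e3 e4).
Qed.

Local Open Scope ring_scope.

Lemma E2 (i j : 'I_2) (p : sperm 2) : speven p -> E i j p = (i == j).
Proof.
move=> hev.
have he : p.2 ord0 = p.2 ord_max.
  move: hev; rewrite /speven card_setsum !big_ord_recr big_ord0 /=.
  have -> : widen_ord (leqnSn 1) ord_max = ord0 :> 'I_2 by apply: val_inj.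
  by case: (p.2 ord0); case: (p.2 ord_max).
rewrite E_sym //.
have v0 : sapp p (rt 0) = - spval p ord_max.
  by rewrite -sapp_k -sappN.
have v1 : sapp p (rt 1) = spval p ord0 by rewrite -sapp_k.
have v2 : sapp p (rt 2) = spval p ord_max by rewrite -sapp_k.
have hs : nat_of_ord (p.1 ord0) != nat_of_ord (p.1 ord_max).
  by rewrite val_eqE (inj_eq perm_inj).
have b0 := ltn_ord (p.1 ord0); have b1 := ltn_ord (p.1 ord_max).
have V : forall k : 'I_2, sapp p (rt k) = if val k == 0%N then - spval p ord_max else spval p ord0.
  by case=> [[|[|?]] h] //; rewrite ?v0 ?v1.
have VS : forall k : 'I_2, sapp p (rt k.+1) = if val k == 0%N then spval p ord0 else spval p ord_max.
  by case=> [[|[|?]] h] //; rewrite ?v1 ?v2.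
rewrite V VS !spvalE -he.
case: (p.2 ord0); case: i j => [[|[|?]] hi] [[|[|?]] hj] //=; rewrite -val_eqE /exc /=; lia.
Qed.

Lemma sumE n : (1 < n)%N ->
  ((\sum_(i : 'I_n) \sum_(j : 'I_n) #|[set p in G n | E i j p]|) * n.-1 = n * #|G n|)%N.
Proof.
case: n => [|[|[|m]]] // _.
  have c : forall i j : 'I_2, #|[set p in G 2 | E i j p]| = ((i == j) * #|G 2|)%N.
    move=> i j; rewrite card_in_setsum.
    rewrite (eq_bigr (fun _ => nat_of_bool (i == j))); last first.
      by move=> p; rewrite inE => hp; rewrite E2.
    by rewrite sum_nat_const mulnC.
  under eq_bigr => i _ do under eq_bigr => j _ do rewrite c.
  rewrite !big_ord_recr !big_ord0 /=; lia.
have h : ((\sum_(i < m.+3) \sum_(j < m.+3) #|[set p in G m.+3 | E i j p]|) * (m.+3 * m.+2)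
   = m.+3 * (m.+3 * #|G m.+3|))%N.
  rewrite big_distrl /=; under eq_bigr => i _ do rewrite big_distrl /=.
  under eq_bigr => i _ do under eq_bigr => j _ do rewrite (E_card i j) //.
  by rewrite !sum_nat_const !card_ord.
by move/eqP: h; rewrite mulnCA eqn_pmul2l // => /eqP.
Qed.

Unset Implicit Arguments.
Local Open Scope ring_scope.

Theorem proposition5p8 (n : nat) (hn : (2 <= n)%N) :
  ED (fun p : sperm n => (des p + ides p)%N) = n%:R /\
  VD (fun p : sperm n => (des p + ides p)%N) =
    2 * VD (fun p : sperm n => des p) + n%:R / (2 * n - 2)%:R.
Proof.
have hn1 : (1 < n)%N by [].
have EDE : forall f : sperm n -> nat, ED f = (\sum_(p in G n) f p)%:R / (#|G n|)%:R.
  move=> f; rewrite /ED natr_sum; congr (_ / _); apply: eq_bigl => p; by rewrite inE.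
have hN : (0 < #|G n|)%N.
  apply/card_gt0P; exists (1%g, [ffun => false]); rewrite inE /speven.
  by rewrite (_ : [set i | _] = set0) ?cards0 //; apply/setP => i; rewrite !inE ffunE.
have h1 := half_des hn1; have h2 := half_ides hn1; have h3 := sq_ides n.
have h4 := sum_four hn1; have h5 := sumE hn1.
move: h1 h2 h3 h4 h5 hN EDE.
set N := #|G n|.
set S1 := \sum_(p in G n) des p; set T1 := \sum_(p in G n) ides p.
set S2 := \sum_(p in G n) (des p ^ 2)%N; set T2 := \sum_(p in G n) (ides p ^ 2)%N.
set X := \sum_(p in G n) (des p * ides p)%N.
set SE := \sum_(i : 'I_n) _.
move=> h1 h2 h3 h4 h5 hN EDE.
have nN0 : (N%:R : rat) != 0 by rewrite pnatr_eq0 -lt0n.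
have n10 : (n%:R : rat) - 1 != 0.
  by rewrite subr_eq0 (eqr_nat rat n 1); apply/eqP => /eqP; lia.
have en1 : ((n.-1)%:R : rat) = n%:R - 1.
  have e : (n.-1 + 1 = n)%N by lia.
  by rewrite -{2}e natrD addrK.
have e1 : (S1%:R : rat) = n%:R * N%:R / 2.
  have h1r : 2 * (S1%:R : rat) = n%:R * N%:R by have := congr1 (GRing.natmul (1 : rat)) h1; rewrite !natrM.
  by rewrite -h1r; field.
have e2 : (T1%:R : rat) = n%:R * N%:R / 2.
  have h2r : 2 * (T1%:R : rat) = n%:R * N%:R by have := congr1 (GRing.natmul (1 : rat)) h2; rewrite !natrM.
  by rewrite -h2r; field.
have e5 : (SE%:R : rat) = n%:R * N%:R / (n%:R - 1).
  have h5r : (SE%:R : rat) * (n%:R - 1) = n%:R * N%:R by rewrite -en1; have := congr1 (GRing.natmul (1 : rat)) h5; rewrite !natrM.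
  by rewrite -h5r; field.
have e4 : (X%:R : rat) = (n%:R * n%:R * N%:R + SE%:R) / 4.
  have h4r : 4 * (X%:R : rat) = n%:R * n%:R * N%:R + SE%:R.
    have := congr1 (GRing.natmul (1 : rat)) h4; rewrite !natrD !natrM. move=> <-; ring.
  by rewrite -h4r; field.
have e6 : ((2 * n - 2)%N%:R : rat) = 2 * (n%:R - 1).
  have e : (2 * n - 2 = 2 * n.-1)%N by lia.
  by rewrite e natrM en1.
split.
  rewrite EDE big_split /= -/S1 -/T1 natrD e1 e2; field.
  by rewrite nN0.
rewrite /VD !EDE /=.
rewrite (eq_bigr (fun p => (des p ^ 2 + ides p ^ 2 + 2 * (des p * ides p))%N)); last first.
  by move=> p _; rewrite sqrnD.
rewrite !big_split /= big1_eq addn0 -/S1 -/T1 -/S2 -/T2 -/X h3.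
rewrite !natrD e1 e2 e4 e5 e6; field.
by rewrite n10 nN0.
Qed.
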